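(* There exist absolute constants $c,c'>0$ such that the following holds. Let $G=(V,E)$ be an unweighted undirected graph, let $\ell\ge1$ be an integer, let $V=A_0\supseteq A_1\supseteq\cdots\supseteq A_{\ell-1}\supseteq A_\ell=\emptyset$ be arbitrary nested vertex sets, and let $H$ (with weights $\omega'$) be the Thorup–Zwick edge set defined in the context. Let $0<\epsilon<1/6$ with $1/\epsilon$ an integer. Then for every $i\in\{0,1,\dots,\ell-1\}$ and every pair $x,y\in V$ with $d_G(x,y)\le(1/\epsilon)^i$, at least one of the following holds: (1) (successful) $d_H(x,y)\le d_G(x,y)+c\cdot i\cdot(1/\epsilon)^{i-1}$; (2) (failing) $d_G(x,A_{i+1})\le c'\cdot(1/\epsilon)^i$. In particular, for $i=\ell-1$ (where $d_G(x,A_\ell)=\infty$) alternative (1) always holds.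
   Context: Thorup–Zwick construction: given nested sets $V=A_0\supseteq A_1\supseteq\cdots\supseteq A_\ell=\emptyset$, write $d_G(v,S)=\min_{s\in S}d_G(v,s)$ with $d_G(v,\emptyset)=\infty$. For $v\in V$ and $j$ with $A_j\neq\emptyset$, the pivot $p_j(v)$ is a vertex of $A_j$ closest to $v$ (ties broken consistently). For $0\le i\le\ell-1$ and $u\in A_i\setminus A_{i+1}$, the bunch is $B(u)=\{v\in A_i: d_G(u,v)<d_G(u,A_{i+1})\}\cup\{p_{i+1}(u)\}$ (the pivot term omitted if $A_{i+1}=\emptyset$; thus $B(u)=A_{\ell-1}$ for $u\in A_{\ell-1}$). The edge set is $H=\{(u,v):u\in V, v\in B(u)\}\cup\{(v,p_j(v)): v\in V,\ 1\le j\le \ell-1,\ A_j\neq\emptyset\}$, each edge $(u,v)$ having weight $\omega'(u,v)=d_G(u,v)$. $d_H$ denotes shortest-path distance in the weighted graph $(V,H,\omega')$. *)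

(* Defs.v *)
From Stdlib Require Import ClassicalEpsilon.
From mathcomp Require Import all_boot.
Set Implicit Arguments. Unset Strict Implicit. Unset Printing Implicit Defensive.

(* Extended naturals: [None] stands for +infinity. *)
Definition oadd (x y : option nat) : option nat :=
  match x, y with Some a, Some b => Some (a + b) | _, _ => None end.
Definition omin (x y : option nat) : option nat :=
  match x, y with
  | None, _ => y | _, None => x | Some a, Some b => Some (minn a b) end.
Definition ole (x y : option nat) : bool :=
  match x, y with
  | _, None => true | None, Some _ => false | Some a, Some b => a <= b end.
Definition olt (x y : option nat) : bool :=
  match x, y with
  | None, _ => false | Some _, None => true | Some a, Some b => a < b end.

Section TZ.
Variable T : finType.
Variable e : rel T.

Definition walkk (u v : T) (k : nat) : bool :=
  [exists s : k.-tuple T, path e u s && (last u s == v)].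

Definition gdist (u v : T) : option nat :=
  match excluded_middle_informative (exists k, walkk u v k) with
  | left H => Some (ex_minn H)
  | right _ => None
  end.

Definition sdist (u : T) (S : {set T}) : option nat :=
  \big[omin/None]_(s in S) gdist u s.

Definition pivot_spec (A : nat -> {set T}) (p : nat -> T -> T) : Prop :=
  forall j v, A j != set0 ->
    p j v \in A j /\ forall a, a \in A j -> ole (gdist v (p j v)) (gdist v a).

Variables (l : nat) (A : nat -> {set T}) (p : nat -> T -> T).

Definition bunch (u v : T) : Prop :=
  exists i, [/\ i < l, u \in A i, u \notin A i.+1 &
    (v \in A i /\ olt (gdist u v) (sdist u (A i.+1)))
    \/ (A i.+1 != set0 /\ v = p i.+1 u)].

Definition Hedge (u v : T) : Prop :=
  bunch u v \/ bunch v u \/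
  exists j, [/\ 1 <= j, j <= l - 1, A j != set0 & (v = p j u \/ u = p j v)].

Fixpoint Hwalk (x : T) (s : seq T) : Prop :=
  match s with [::] => True | y :: s' => Hedge x y /\ Hwalk y s' end.

(* weight of a walk under omega'(u,v) = d_G(u,v) *)
Fixpoint wlen (x : T) (s : seq T) : option nat :=
  match s with [::] => Some 0 | y :: s' => oadd (gdist x y) (wlen y s') end.

Definition dH_le (x y : T) (K : nat) : Prop :=
  exists s, [/\ Hwalk x s, last x s = y & ole (wlen x s) (Some K)].

End TZ.

(* Main.v *)
Require Import Defs.
From Stdlib Require Import ClassicalEpsilon.
From mathcomp Require Import all_boot zify.
Set Implicit Arguments. Unset Strict Implicit. Unset Printing Implicit Defensive.

Lemma ole_trans x y z : ole x y -> ole y z -> ole x z.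
Proof. case: x y z => [a|] [b|] [c|] //=; exact: leq_trans. Qed.
Lemma ole_ominl x y : ole (omin x y) x.
Proof. case: x y => [a|] [b|] //=; by rewrite ?geq_minl. Qed.
Lemma ole_ominr x y : ole (omin x y) y.
Proof. case: x y => [a|] [b|] //=; by rewrite ?geq_minr. Qed.
Lemma omin_cases x y : omin x y = x \/ omin x y = y.
Proof. case: x y => [a|] [b|] /=; auto. rewrite /minn; case: ifP; auto. Qed.
Lemma ole_oadd x y a b : ole x (Some a) -> ole y (Some b) -> ole (oadd x y) (Some (a + b)).
Proof. case: x y => [c|] [d|] //=; exact: leq_add. Qed.

Section Aux.
Variable T : finType.
Variable e : rel T.

Definition gle u v K := ole (gdist e u v) (Some K).

Lemma gle_walk u s : path e u s -> gle u (last u s) (size s).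
Proof.
move=> Hp. rewrite /gle /gdist; case: excluded_middle_informative => [H|H].
  case: ex_minnP => k _ Hmin /=; apply: Hmin.
  apply/existsP; exists (in_tuple s); by rewrite Hp eqxx.
exfalso; apply: H; exists (size s); apply/existsP; exists (in_tuple s); by rewrite Hp eqxx.
Qed.

Lemma gdist_spec u v k : gdist e u v = Some k ->
  exists s, [/\ path e u s, last u s = v & size s = k].
Proof.
rewrite /gdist; case: excluded_middle_informative => [H|//].
case: ex_minnP => k' /existsP [s /andP [Hp /eqP Hl]] _ [<-].
exists (tval s); split => //; exact: size_tuple.
Qed.

Lemma gle_spec u v K : gle u v K ->
  exists s, [/\ path e u s, last u s = v & size s <= K].
Proof.
rewrite /gle; case E: (gdist e u v) => [k|] //= Hk.
have [s [H1 H2 H3]] := gdist_spec E; exists s; split => //; by rewrite H3.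
Qed.

Lemma gle_refl u : gle u u 0.
Proof. exact: (@gle_walk u [::]). Qed.

Lemma gle_mono u v a b : gle u v a -> a <= b -> gle u v b.
Proof. rewrite /gle; case: (gdist e u v) => [k|] //= h1 h2; exact: leq_trans h1 h2. Qed.

Lemma gle_tri u v w a b : gle u v a -> gle v w b -> gle u w (a + b).
Proof.
move=> /gle_spec [s1 [P1 L1 S1]] /gle_spec [s2 [P2 L2 S2]].
have := @gle_walk u (s1 ++ s2); rewrite cat_path P1 L1 P2 last_cat L1 L2 => /(_ isT) H.
apply: gle_mono H _; rewrite size_cat; exact: leq_add.
Qed.

Hypothesis esym : symmetric e.

Lemma gle_sym u v K : gle u v K -> gle v u K.
Proof.
move=> /gle_spec [s [P1 <- S1]].
have H : path e (last u s) (rev (belast u s)).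
  rewrite rev_path (@eq_path _ _ e) //; move=> a b /=; exact: esym.
have := gle_walk H.
have -> : last (last u s) (rev (belast u s)) = u.
  case: s {P1 S1 H} => [|y s] //=; by rewrite rev_cons last_rcons.
rewrite size_rev size_belast => h; exact: gle_mono h S1.
Qed.

End Aux.

Section Sd.
Variable T : finType.
Variable e : rel T.

Lemma sdist_le u (S : {set T}) s : s \in S -> ole (sdist e u S) (gdist e u s).
Proof.
rewrite /sdist => Hs.
have : s \in index_enum T by rewrite mem_index_enum.
elim: (index_enum T) => [|a r IH] //.
rewrite inE big_cons => /orP [/eqP <-|Hr].
  case: ifP => H; [exact: ole_ominl | by rewrite Hs in H].
case: ifP => _; last exact: IH.
apply: ole_trans (ole_ominr _ _) (IH Hr).
Qed.

Lemma sdist_wit u (S : {set T}) : sdist e u S = None \/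
  exists2 s, s \in S & sdist e u S = gdist e u s.
Proof.
rewrite /sdist; apply: (big_ind (fun z => z = None \/ exists2 s, s \in S & z = gdist e u s)).
- by left.
- move=> x y Hx Hy; case: (omin_cases x y) => ->; assumption.
- move=> i Hi; right; by exists i.
Qed.

Lemma sdist_le_wit u (S : {set T}) K : ole (sdist e u S) (Some K) ->
  exists2 s, s \in S & gle e u s K.
Proof.
case: (sdist_wit u S) => [->//|[s Hs E]]; rewrite E => H; by exists s.
Qed.

Lemma sdist_gt u v (S : {set T}) K :
  (forall a, a \in S -> ~ gle e u a K) -> gle e u v K -> olt (gdist e u v) (sdist e u S).
Proof.
move=> Hn; rewrite /gle; case E: (gdist e u v) => [g|] //= Hg.
case: (sdist_wit u S) => [->//|[s Hs ->]].
have := Hn s Hs; rewrite /gle; case: (gdist e u s) => [h|] //= Hh.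
rewrite ltnNge; apply/negP => Hle; apply: Hh; exact: leq_trans Hle Hg.
Qed.
End Sd.
Section DH.
Variable T : finType.
Variable e : rel T.
Variables (l : nat) (A : nat -> {set T}) (p : nat -> T -> T).

Lemma wlen_cat x s1 s2 : wlen e x (s1 ++ s2) = oadd (wlen e x s1) (wlen e (last x s1) s2).
Proof.
elim: s1 x => [|y s1 IH] x /=; first by case: (wlen e x s2).
rewrite IH; case: (gdist e x y) (wlen e y s1) (wlen e (last y s1) s2) => [a|] [b|] [c|] //=.
by rewrite addnA.
Qed.

Lemma Hwalk_cat x s1 s2 : Hwalk e l A p x s1 -> Hwalk e l A p (last x s1) s2 ->
  Hwalk e l A p x (s1 ++ s2).
Proof. elim: s1 x => [|y s1 IH] x //= [H1 H2] H3; split => //; exact: IH. Qed.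

Lemma dH_refl x : dH_le e l A p x x 0.
Proof. by exists [::]. Qed.

Lemma dH_mono x y a b : dH_le e l A p x y a -> a <= b -> dH_le e l A p x y b.
Proof.
move=> [s [H1 H2 H3]] hb; exists s; split => //.
move: H3; case: (wlen e x s) => [k|] //= hk; exact: leq_trans hk hb.
Qed.

Lemma dH_cat x y z a b : dH_le e l A p x y a -> dH_le e l A p y z b -> dH_le e l A p x z (a + b).
Proof.
move=> [s1 [H1 H2 H3]] [s2 [K1 K2 K3]]; exists (s1 ++ s2); split.
- apply: Hwalk_cat => //; by rewrite H2.
- by rewrite last_cat H2.
- rewrite wlen_cat H2; exact: ole_oadd.
Qed.

Lemma dH_edge u v K : Hedge e l A p u v -> gle e u v K -> dH_le e l A p u v K.
Proof.
move=> H G; exists [:: v]; split => //=.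
rewrite -[K]addn0; exact: ole_oadd.
Qed.
End DH.

Section Main.
Variable T : finType.
Variable e : rel T.
Hypothesis esym : symmetric e.
Variables (l : nat) (A : nat -> {set T}) (p : nat -> T -> T).
Hypothesis Hl : 1 <= l.
Hypothesis HA0 : A 0 = setT.
Hypothesis Hpiv : pivot_spec e A p.
Variable t : nat.
Hypothesis Ht : 6 < t.

Definition near i u K := exists2 a, a \in A i & gle e u a K.

Lemma pivot_near i u K : near i u K -> [/\ A i != set0, p i u \in A i & gle e u (p i u) K].
Proof.
move=> [a Ha Hg]; have Hne : A i != set0 by apply/set0Pn; exists a.
have [H1 H2] := Hpiv u Hne; split => //; exact: ole_trans (H2 a Ha) Hg.
Qed.

Lemma not_fail x S K a K' : ~~ ole (sdist e x S) (Some K) -> a \in S -> gle e x a K' -> K' <= K -> False.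
Proof.
move=> /negP Hf Ha G hK; apply: Hf; apply: ole_trans (sdist_le e x Ha) _.
exact: gle_mono G hK.
Qed.

Definition Pw i := forall x s, path e x s -> size s <= t ^ i ->
  dH_le e l A p x (last x s) (size s + 18 * i * t ^ (i - 1))
  \/ ole (sdist e x (A i.+1)) (Some (4 * t ^ i)).

Lemma base : Pw 0.
Proof.
move=> x s Hp; rewrite expn0 mul0n addn0 muln1 => Hs.
case: s Hp Hs => [|y [|z s]] //= Hp _; first by left; exact: dH_refl.
case: (boolP (ole (sdist e x (A 1)) (Some 4))) => Hf; [by right|left].
have Gxy : gle e x y 1 by exact: (@gle_walk _ e x [:: y]).
apply: (dH_edge _ Gxy); left; exists 0; split => //.
- by rewrite HA0 inE.
- apply/negP => H; apply: not_fail Hf H (gle_refl e x) _; done.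
- left; split; first by rewrite HA0 inE.
  apply: sdist_gt Gxy => a Ha Ga; exact: not_fail Hf Ha Ga _.
Qed.

Lemma tE j : t * (18 * j * t ^ (j - 1)) <= 18 * j * t ^ j.
Proof.
case: j => [|j]; first by rewrite !muln0 mul0n.
rewrite subSS subn0 expnS; nia.
Qed.

Lemma chunk j : Pw j -> forall k x s, path e x s -> size s <= k * t ^ j ->
  dH_le e l A p x (last x s) (size s + k * (18 * j * t ^ (j - 1))) \/
  exists u w d1 d2 d3 k1 k2,
   [/\ dH_le e l A p x u (d1 + k1 * (18 * j * t ^ (j - 1))), gle e x u d1, gle e u w d2,
       dH_le e l A p w (last x s) (d3 + k2 * (18 * j * t ^ (j - 1))) &
       [/\ near j.+1 u (4 * t ^ j), near j.+1 w (5 * t ^ j), d1 + d2 + d3 <= size s & k1 + k2 <= k]].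
Proof.
move=> IH; set E := 18 * j * t ^ (j - 1); set m := t ^ j.
elim=> [|k IHk] x s Hp Hs.
  move: Hs; rewrite mul0n leqn0 size_eq0 => /eqP ->; left.
  exact: dH_mono (dH_refl e l A p x) (leq0n _).
have Es : s = take m s ++ drop m s by rewrite cat_take_drop.
set s1 := take m s in Es; set s2 := drop m s in Es.
have /andP [Hp1 Hp2] : path e x s1 && path e (last x s1) s2 by rewrite -cat_path -Es.
have Hs1 : size s1 <= m by rewrite size_take; case: ifP => // /negbT; rewrite -leqNgt.
have Hs2 : size s2 <= k * m by rewrite size_drop; move: Hs; rewrite mulSn; lia.
have Hsz : size s = size s1 + size s2 by rewrite {1}Es size_cat.
set x1 := last x s1.
have Hlast : last x s = last x1 s2 by rewrite {1}Es last_cat.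
case: (IH x s1 Hp1 Hs1) => [Hd1 | Hf1];
  case: (IHk x1 s2 Hp2 Hs2) => [Hd2 | [u [w [d1 [d2 [d3 [k1 [k2 [H1 H2 H3 H4 [H5 H6 H7 H8]]]]]]]]]].
- left; rewrite Hlast; apply: dH_mono (dH_cat Hd1 Hd2) _; rewrite Hsz; nia.
- right; exists u, w, (size s1 + d1), d2, d3, k1.+1, k2; split.
  + apply: dH_mono (dH_cat Hd1 H1) _; nia.
  + exact: gle_tri (gle_walk Hp1) H2.
  + done.
  + by rewrite Hlast.
  + split => //; lia.
- have [a Ha Ga] := sdist_le_wit Hf1.
  right; exists x, x1, 0, (size s1), (size s2), 0, k; split.
  + exact: dH_mono (dH_refl e l A p x) (leq0n _).
  + exact: gle_refl.
  + exact: gle_walk Hp1.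
  + by rewrite Hlast.
  + split; [by exists a| |lia|lia].
    exists a => //; apply: gle_mono (gle_tri (gle_sym esym (gle_walk Hp1)) Ga) _; lia.
- have [a Ha Ga] := sdist_le_wit Hf1.
  right; exists x, w, 0, (size s1 + d1 + d2), d3, 0, k2; split.
  + exact: dH_mono (dH_refl e l A p x) (leq0n _).
  + exact: gle_refl.
  + exact: gle_tri (gle_tri (gle_walk Hp1) H2) H3.
  + by rewrite Hlast.
  + split; [by exists a| done |lia|lia].
Qed.

Lemma step j : Pw j -> j.+1 < l -> Pw j.+1.
Proof.
move=> IH Hjl x s Hp Hs.
rewrite subSS subn0.
have Hs' : size s <= t * t ^ j by rewrite -expnS.
have HtE := tE j.
set E := 18 * j * t ^ (j - 1) in HtE *; set m := t ^ j in Hs' HtE *.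
case: (chunk IH Hp Hs') => [Hd | [u [w [d1 [d2 [d3 [k1 [k2 [H1 H2 H3 H4 [H5 H6 H7 H8]]]]]]]]]].
  left; apply: dH_mono Hd _; nia.
case: (boolP (ole (sdist e x (A j.+2)) (Some (4 * t ^ j.+1)))) => Hf; [by right|left].
have [Hne Hpu Gpu] := pivot_near H5; have [_ Hpw Gpw] := pivot_near H6.
set pu := p j.+1 u in Hpu Gpu *; set pw := p j.+1 w in Hpw Gpw *.
have Ed1 : Hedge e l A p u pu.
  right; right; exists j.+1; split => //; [lia | by left].
have Ed3 : Hedge e l A p pw w.
  right; right; exists j.+1; split => //; [lia | by right].
have Gx : gle e x pu (d1 + 4 * m) := gle_tri H2 Gpu.
have Gpp : gle e pu pw (4 * m + d2 + 5 * m) := gle_tri (gle_tri (gle_sym esym Gpu) H3) Gpw.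
have Hsz : d1 + d2 <= t * m by lia.
have Hpu2 : pu \notin A j.+2.
  apply/negP => H; apply: not_fail Hf H Gx _; rewrite expnS -/m; nia.
have Ed2 : Hedge e l A p pu pw.
  left; exists j.+1; split => //; left; split => //.
  apply: sdist_gt Gpp => a Ha Ga; apply: not_fail Hf Ha (gle_tri Gx Ga) _.
  rewrite expnS -/m; nia.
have := dH_cat H1 (dH_cat (dH_edge Ed1 Gpu) (dH_cat (dH_edge Ed2 Gpp)
          (dH_cat (dH_edge Ed3 (gle_sym esym Gpw)) H4))).
move=> Hd; apply: dH_mono Hd _.
have hk : k1 * E + k2 * E <= t * E by rewrite -mulnDl leq_mul2r H8 orbT.
nia.
Qed.

Lemma all_levels i : i < l -> Pw i.
Proof.
elim: i => [|i IHi] Hi; first exact: base.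
apply: step => //; apply: IHi; lia.
Qed.
End Main.

Theorem lemma3p1 :
  exists c c' : nat, [/\ 0 < c, 0 < c' &
  forall (T : finType) (e : rel T), symmetric e -> irreflexive e ->
  forall (l : nat) (A : nat -> {set T}) (p : nat -> T -> T),
    1 <= l ->
    A 0 = setT ->
    (forall i, i < l -> A i.+1 \subset A i) ->
    A l = set0 ->
    pivot_spec e A p ->
  forall t : nat, 6 < t ->   (* t = 1/epsilon, 0 < epsilon < 1/6 *)
  forall i, i < l ->
  forall (x y : T) (D : nat),
    gdist e x y = Some D -> D <= t ^ i ->
    dH_le e l A p x y (D + c * i * t ^ (i - 1))
    \/ ole (sdist e x (A i.+1)) (Some (c' * t ^ i))].
Proof.
exists 18, 4; split => // T e Hsym _ l A p Hl HA0 _ _ Hpiv t Ht i Hi x y D HD HDt.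
have [s [Hp Hlast Hsz]] := gdist_spec HD.
have := all_levels Hsym Hl HA0 Hpiv Ht Hi Hp; rewrite Hsz Hlast; apply.
by [].
Qed.
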